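(* Let $f:\mathbb{R}^p\to\mathbb{R}$ be of the form $f(x)=g(Hx)$ with $H\in\mathbb{R}^{m\times p}$ and $g:\mathbb{R}^m\to\mathbb{R}$ an $\alpha$-strongly convex ($\alpha>0$) and $L$-smooth function, and assume the set $X^*$ of minimizers of $f$ is nonempty. Let $c_H>0$ be a Hoffman coefficient of $H$, i.e. a constant with $\|Hx-H[x]\|^2\ge c_H\|x-[x]\|^2$ for all $x\in\mathbb{R}^p$, and let $C_H=1/\|H\|_2^2$. Then for all $x\in\mathbb{R}^p$, $$\langle\nabla f(x)-\nabla f([x]),\,x-[x]\rangle\ge\frac{L\alpha c_H}{L+\alpha}\|x-[x]\|^2+\frac{C_H}{L+\alpha}\|\nabla f(x)-\nabla f([x])\|^2.$$
   Context: $g$ is $L$-smooth if $\|\nabla g(u)-\nabla g(v)\|\le L\|u-v\|$, and $\alpha$-strongly convex if $g(v)\ge g(u)+\langle v-u,\nabla g(u)\rangle+\frac\alpha2\|v-u\|^2$ for all $u,v$. $f$ is convex, so $X^*$ is closed and convex and $[x]$ denotes the Euclidean projection of $x$ onto $X^*$. $\|H\|_2=\sup_{x\ne0}\|Hx\|/\|x\|$; norms are Euclidean. *)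

(* Defs.v *)
From HB Require Import structures.
From mathcomp Require Import all_boot all_order all_algebra.
From mathcomp Require Import all_classical all_reals all_analysis.
Set Implicit Arguments. Unset Strict Implicit. Unset Printing Implicit Defensive.
Import Order.TTheory GRing.Theory Num.Theory.
Import numFieldNormedType.Exports.
Local Open Scope classical_set_scope.
Local Open Scope ring_scope.

Section Defs.
Variable R : realType.

Definition dotv n (u v : 'cV[R]_n) : R := \sum_(i < n) u i ord0 * v i ord0.
Definition enorm n (v : 'cV[R]_n) : R := Num.sqrt (dotv v v).

Definition has_gradient n (f : 'cV[R]_n -> R) (df : 'cV[R]_n -> 'cV[R]_n) :=
  forall x : 'cV[R]_n,
    (fun h : 'cV[R]_n => (f (x + h) - f x - dotv (df x) h) / enorm h) @ (0 : 'cV[R]_n)^' --> (0 : R).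

Definition L_smooth n (L : R) (dg : 'cV[R]_n -> 'cV[R]_n) :=
  forall u v, enorm (dg u - dg v) <= L * enorm (u - v).

Definition strongly_convex n (alpha : R) (g : 'cV[R]_n -> R) (dg : 'cV[R]_n -> 'cV[R]_n) :=
  forall u v, g v >= g u + dotv (v - u) (dg u) + alpha / 2 * enorm (v - u) ^+ 2.

Definition argmin n (f : 'cV[R]_n -> R) : set 'cV[R]_n :=
  [set x | forall y, f x <= f y].

Definition is_proj n (S : set 'cV[R]_n) (x xs : 'cV[R]_n) :=
  S xs /\ forall y, S y -> enorm (x - xs) <= enorm (x - y).

Definition opnorm2 m p (H : 'M[R]_(m, p)) : R :=
  sup [set r | exists x : 'cV[R]_p, x != 0 /\ r = enorm (H *m x) / enorm x].

End Defs.

(* Main.v *)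
Require Import Defs.
From HB Require Import structures.
From mathcomp Require Import all_boot all_order all_algebra.
From mathcomp Require Import all_classical all_reals all_analysis.
From mathcomp Require Import ring lra.
Import Order.TTheory GRing.Theory Num.Theory.
Local Open Scope classical_set_scope.
Local Open Scope ring_scope.

Section Basic.
Context {R : realType}.
Implicit Types (n : nat).

Lemma dotvC {n} (u v : 'cV[R]_n) : dotv u v = dotv v u.
Proof. by apply: eq_bigr => i _; rewrite mulrC. Qed.
Lemma dotvDl {n} (u v w : 'cV[R]_n) : dotv (u + v) w = dotv u w + dotv v w.
Proof. by rewrite /dotv -big_split; apply: eq_bigr => i _; rewrite mxE mulrDl. Qed.
Lemma dotvDr {n} (u v w : 'cV[R]_n) : dotv w (u + v) = dotv w u + dotv w v.
Proof. by rewrite dotvC dotvDl !(dotvC w). Qed.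
Lemma dotvZl {n} c (u w : 'cV[R]_n) : dotv (c *: u) w = c * dotv u w.
Proof. by rewrite /dotv mulr_sumr; apply: eq_bigr => i _; rewrite mxE mulrA. Qed.
Lemma dotvZr {n} c (u w : 'cV[R]_n) : dotv w (c *: u) = c * dotv w u.
Proof. by rewrite dotvC dotvZl dotvC. Qed.
Lemma dotvNl {n} (u w : 'cV[R]_n) : dotv (- u) w = - dotv u w.
Proof. by rewrite -scaleN1r dotvZl mulN1r. Qed.
Lemma dotvNr {n} (u w : 'cV[R]_n) : dotv w (- u) = - dotv w u.
Proof. by rewrite dotvC dotvNl dotvC. Qed.
Lemma dotv0l {n} (w : 'cV[R]_n) : dotv 0 w = 0.
Proof. by rewrite -(scale0r (0 : 'cV[R]_n)) dotvZl mul0r. Qed.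
Lemma dotv0r {n} (w : 'cV[R]_n) : dotv w 0 = 0.
Proof. by rewrite dotvC dotv0l. Qed.
Lemma dotv_ge0 {n} (u : 'cV[R]_n) : 0 <= dotv u u.
Proof. by apply: sumr_ge0 => i _; rewrite -expr2 sqr_ge0. Qed.
Lemma dotv_eq0 {n} (u : 'cV[R]_n) : dotv u u = 0 -> u = 0.
Proof.
move=> /psumr_eq0P H0; apply/matrixP => i j; rewrite (ord1 j) mxE.
have := H0 (fun k _ => (ltac:(by rewrite -expr2 sqr_ge0) : 0 <= u k ord0 * u k ord0)) i isT => /eqP; rewrite mulf_eq0 orbb => /eqP ->//.
Qed.
Lemma dotv_mulmx {m n} (A : 'M[R]_(m, n)) u v :
  dotv (A *m u) v = dotv u (A^T *m v).
Proof.
rewrite /dotv; under eq_bigr do rewrite mxE big_distrl.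
under [RHS]eq_bigr do rewrite mxE big_distrr.
rewrite exchange_big; apply: eq_bigr => i _; apply: eq_bigr => j _.
by rewrite mxE /=; ring.
Qed.
Lemma enorm_ge0 {n} (u : 'cV[R]_n) : 0 <= enorm u.
Proof. exact: sqrtr_ge0. Qed.
Lemma enormE2 {n} (u : 'cV[R]_n) : enorm u ^+ 2 = dotv u u.
Proof. by rewrite sqr_sqrtr // dotv_ge0. Qed.
Lemma enormZ {n} c (u : 'cV[R]_n) : enorm (c *: u) = `|c| * enorm u.
Proof. by rewrite /enorm dotvZl dotvZr mulrA -expr2 sqrtrM ?sqr_ge0 // sqrtr_sqr. Qed.
Lemma CS2 {n} (u v : 'cV[R]_n) : dotv u v ^+ 2 <= dotv u u * dotv v v.
Proof.
have [/dotv_eq0 ->|] := eqVneq (dotv v v) 0.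
  by rewrite dotv0r dotv0l expr2 !mul0r mulr0.
move=> a0; have apos : 0 < dotv v v by rewrite lt_def a0 dotv_ge0.
have := dotv_ge0 (dotv v v *: u - dotv u v *: v).
rewrite !(dotvDl, dotvDr, dotvNl, dotvNr, dotvZl, dotvZr) (dotvC v u) => h.
have : 0 <= dotv v v * (dotv v v * dotv u u - dotv u v ^+ 2).
  by move: h; set a := dotv v v; set b := dotv u v; set c := dotv u u; nra.
rewrite pmulr_rge0 // subr_ge0 mulrC //.
Qed.
Lemma CS {n} (u v : 'cV[R]_n) : dotv u v <= enorm u * enorm v.
Proof.
apply: le_trans (ler_norm _) _.
rewrite -sqrtr_sqr /enorm -sqrtrM ?dotv_ge0 //; exact/ler_wsqrtr/CS2.
Qed.
End Basic.

Lemma lim_nat (R : realType) (a b c : R) :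
  (forall N : nat, a <= b + c / N.+1%:R) -> a <= b.
Proof.
move=> H; apply/ler_addgt0Pr => e e0.
set N := Num.truncn (`|c| / e).
have hN : `|c| / e < N.+1%:R by apply: truncnS_gt.
apply: (le_trans (H N)); rewrite lerD2l ler_pdivrMr ?ltr0Sn //.
rewrite ltr_pdivrMr // in hN.
by apply: le_trans (ler_norm c) _; rewrite mulrC; apply: ltW.
Qed.

Section Smooth.
Variable R : realType.
Variable n : nat.
Variables (g : 'cV[R]_n -> R) (dg : 'cV[R]_n -> 'cV[R]_n) (alpha L : R).
Hypothesis apos : 0 < alpha.
Hypothesis SC : strongly_convex alpha g dg.
Hypothesis LS : L_smooth L dg.

Lemma SC' u v : g v >= g u + dotv (v - u) (dg u).
Proof.
apply: le_trans (SC u v); rewrite lerDl; apply: mulr_ge0; last exact: sqr_ge0.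
by apply: divr_ge0 => //; apply: ltW.
Qed.

Lemma grad_bound u w d : dotv d (dg w) <= dotv d (dg u) + L * enorm (w - u) * enorm d.
Proof.
have -> : dg w = dg u + (dg w - dg u) by rewrite addrC subrK.
rewrite dotvDr lerD2l. apply: le_trans (CS d _) _.
by rewrite mulrC ler_wpM2r ?enorm_ge0 ?LS.
Qed.

Lemma descent u d : g (u + d) <= g u + dotv (dg u) d + L / 2 * dotv d d.
Proof.
suff step : forall N k, g (u + (k%:R / N.+1%:R) *: d) - g u <=
    k%:R / N.+1%:R * dotv (dg u) d + L * dotv d d * (k%:R * k.+1%:R) / (2 * N.+1%:R ^+ 2).
  apply: (@lim_nat _ _ _ (L / 2 * dotv d d)) => N.
  have := step N N.+1; rewrite divff ?pnatr_eq0 // scale1r mul1r.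
  have -> : L * dotv d d * (N.+1%:R * N.+2%:R) / (2 * N.+1%:R ^+ 2) =
     L / 2 * dotv d d + L / 2 * dotv d d / N.+1%:R :> R.
    rewrite -[N.+2]addn1 natrD; field; apply: lt0r_neq0; have := ler0n R N; lra.
  rewrite -!addrA => h; rewrite -lerBlDl; exact: h.
move=> N; elim=> [|k IH].
  by rewrite !(mulr0n, mul0r, mulr0, scale0r, addr0, subrr).
pose a : R := k%:R / N.+1%:R; set b := k.+1%:R / N.+1%:R.
have Np : 0 < N.+1%:R :> R by rewrite ltr0Sn.
have ab : b - a = N.+1%:R^-1 by rewrite /a /b -mulrBl -natrB // subSnn mul1r.
have b0 : 0 <= b by rewrite divr_ge0 // ler0n.
have h1 := SC' (u + b *: d) (u + a *: d).
move: h1; have -> : u + a *: d - (u + b *: d) = (- (b - a)) *: d.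
  by rewrite opprD addrACA subrr add0r scaleNr scalerBl opprB addrC.
rewrite dotvZl => h1.
have h2 := grad_bound u (u + b *: d) d.
move: h2; rewrite addrAC subrr add0r enormZ ger0_norm //.
have -> : L * (b * enorm d) * enorm d = L * (b * dotv d d) by rewrite -enormE2 expr2; ring.
move=> h2.
have h3 : (b - a) * dotv d (dg (u + b *: d)) <= (b - a) * (dotv d (dg u) + L * (b * dotv d d)).
  by rewrite ler_wpM2l // ab invr_ge0 ltW.
have E : a * dotv (dg u) d + L * dotv d d * (k%:R * k.+1%:R) / (2 * N.+1%:R ^+ 2)
   + (b - a) * (dotv d (dg u) + L * (b * dotv d d)) =
   b * dotv (dg u) d + L * dotv d d * (k.+1%:R * k.+2%:R) / (2 * N.+1%:R ^+ 2).
  rewrite (dotvC d) ab /b /a -[k.+2]addn1 -[k.+1]addn1 !natrD; field.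
  apply: lt0r_neq0; have := ler0n R N; lra.
move: IH; rewrite -/a => IH.
move: h1 h2 h3 E IH; rewrite !(dotvC d (dg u)); set X := dotv d (dg (u + b *: d)); set P := g (u + a *: d); set Q := g (u + b *: d); set Z := dotv (dg u) d; set gu := g u.
move=> h1 _ h3 E IH; move: h1 h3 E IH.
set W1 := L * _ * (k%:R * _) / _; set W2 := L * _ * (k.+1%:R * _) / _; set T := (b - a) * (Z + _).

move=> h1 h3 E IH; lra.
Qed.


End Smooth.

Lemma limit_aff (R : realType) (GG dd Gd alpha L : R) :
  (forall e, 0 < e -> GG + alpha*(L+e)*dd <= (L+e+alpha)*Gd) ->
  GG + alpha*L*dd <= (L+alpha)*Gd.
Proof.
move=> key.
have [B0|B0] := leP (Gd - alpha * dd) 0.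
  have := key 1 ltr01.
  have -> : GG + alpha * (L + 1) * dd = GG + alpha * L * dd + alpha * dd by ring.
  have -> : (L + 1 + alpha) * Gd = (L + alpha) * Gd + Gd by ring.
  lra.
rewrite -subr_ge0; apply/ler_addgt0Pr => e e0.
have := key (e / (Gd - alpha * dd)) (divr_gt0 e0 B0).
have te : e / (Gd - alpha * dd) * (Gd - alpha * dd) = e by rewrite divfK // gt_eqF.
move: te; set t := e / (Gd - alpha * dd) => te.
have -> : GG + alpha * (L + t) * dd = GG + alpha * L * dd + t * (alpha * dd) by ring.
have -> : (L + t + alpha) * Gd = (L + alpha) * Gd + t * Gd by ring.
have -> : e = t * Gd - t * (alpha * dd) by rewrite -te; ring.
lra.
Qed.

Section Smooth2.
Variable R : realType.
Variable n : nat.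
Variables (g : 'cV[R]_n -> R) (dg : 'cV[R]_n -> 'cV[R]_n) (alpha L : R).
Hypothesis apos : 0 < alpha.
Hypothesis SC : strongly_convex alpha g dg.
Hypothesis LS : L_smooth L dg.

Lemma cocoer_aux (L' : R) : alpha < L' ->
  (forall x y, g (x + y) <= g x + dotv (dg x) y + L' / 2 * dotv y y) ->
  forall u v, dotv (dg v - dg u) (dg v - dg u) + alpha * L' * dotv (v - u) (v - u)
    <= (L' + alpha) * dotv (dg v - dg u) (v - u).
Proof.
move=> aL D u v.
set M := L' - alpha.
have Mpos : 0 < M by rewrite /M subr_gt0.
pose c := - M^-1.
pose s := c *: ((dg v - dg u) - alpha *: (v - u)).
have h1 := SC u (v + s).
have h2 := D v s.
have h3 := SC v (u - s).
have h4 := D u (- s).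
rewrite -subr_ge0 in h1; rewrite -subr_ge0 in h2; rewrite -subr_ge0 in h3; rewrite -subr_ge0 in h4.
have H := addr_ge0 (addr_ge0 h1 h2) (addr_ge0 h3 h4).
rewrite -subr_ge0.
apply: le_trans (mulr_ge0 (ltW Mpos) H) _.
rewrite le_eqVlt; apply/orP; left; apply/eqP.
rewrite !enormE2 /s.
set p := dg u; set q := dg v.
rewrite !(dotvDl, dotvDr, dotvNl, dotvNr, dotvZl, dotvZr).
rewrite ?(dotvC v u) ?(dotvC p u) ?(dotvC p v) ?(dotvC q u) ?(dotvC q v) ?(dotvC q p).
rewrite /c /M; field.
by rewrite subr_eq0 gt_eqF.
Qed.

Lemma cocoer u v : dotv (dg v - dg u) (dg v - dg u) + alpha * L * dotv (v - u) (v - u)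
    <= (L + alpha) * dotv (dg v - dg u) (v - u).
Proof.
have [->|neq] := eqVneq v u.
  by rewrite !subrr !dotv0l !mulr0 addr0.
have ddpos : 0 < dotv (v - u) (v - u).
  rewrite lt_def dotv_ge0 andbT; apply/eqP => /dotv_eq0 /eqP.
  by rewrite subr_eq0 (negbTE neq).
have aleL : alpha <= L.
  have h1 := SC u v; have h2 := @descent _ _ g dg alpha L apos SC LS u (v - u).
  rewrite addrC subrK in h2; rewrite enormE2 (dotvC (v - u)) in h1.
  have : alpha * dotv (v - u) (v - u) <= L * dotv (v - u) (v - u).
    rewrite -subr_ge0; rewrite -subr_ge0 in h1; rewrite -subr_ge0 in h2.
    have := addr_ge0 h1 h2.
    have -> : g v - (g u + dotv (dg u) (v - u) + alpha / 2 * dotv (v - u) (v - u)) +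
      (g u + dotv (dg u) (v - u) + L / 2 * dotv (v - u) (v - u) - g v) =
      (L * dotv (v - u) (v - u) - alpha * dotv (v - u) (v - u)) / 2 by field.
    by rewrite pmulr_lge0 // invr_gt0.
  by rewrite ler_pM2r.
have Dgen : forall L', L <= L' -> forall x y, g (x + y) <= g x + dotv (dg x) y + L' / 2 * dotv y y.
  move=> L' LL' x y; apply: le_trans (@descent _ _ g dg alpha L apos SC LS x y) _.
  by rewrite lerD2l ler_wpM2r ?dotv_ge0 // ler_pM2r.
apply: limit_aff => e e0.
apply: cocoer_aux; first by lra.
by apply: Dgen; lra.
Qed.

End Smooth2.

Lemma grad_small (R : realType) p (f : 'cV[R]_p -> R) df x (q : 'cV[R]_p) e :
  has_gradient f df -> q != 0 -> 0 < e ->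
  exists t : R, 0 < t /\ f (x + t *: q) - f x - dotv (df x) (t *: q) < e * enorm (t *: q).
Proof.
move=> hg q0 e0.
have /cvgr0_norm_lt /(_ e e0) := hg x.
rewrite /within /= => /nbhs_norm0P [d d0 Hd].
have nq : 0 < `|q| by rewrite normr_gt0.
have eq0 : 0 < enorm q.
  rewrite /enorm sqrtr_gt0 lt_def dotv_ge0 andbT; apply/eqP => /dotv_eq0 /eqP.
  by rewrite (negbTE q0).
pose t := d / (2 * (`|q| + 1)).
have t0 : 0 < t by rewrite /t divr_gt0 // mulr_gt0 // ltr_pwDr.
exists t; split => //.
have ht : `|t *: q| < d.
  rewrite normrZ gtr0_norm // /t mulrAC ltr_pdivrMr ?mulr_gt0 ?ltr_pwDr //.
  rewrite ltr_pM2l //; lra.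
have tq0 : t *: q != 0 by rewrite scaler_eq0 negb_or q0 andbT gt_eqF.
have := Hd _ ht tq0.
have Ep : 0 < enorm (t *: q) by rewrite enormZ gtr0_norm // mulr_gt0.
move=> h; rewrite -ltr_pdivrMr //; exact: le_lt_trans (ler_norm _) h.
Qed.

Lemma grad_comp (R : realType) m p (H : 'M[R]_(m, p)) (g : 'cV[R]_m -> R) dg df alpha :
  0 < alpha -> strongly_convex alpha g dg -> has_gradient (fun x => g (H *m x)) df ->
  forall x, df x = H^T *m dg (H *m x).
Proof.
move=> ap sc hg x.
set w := H^T *m dg (H *m x).
have [q0|qn0] := eqVneq (w - df x) 0; first by apply/esym/subr0_eq.
exfalso; set q := w - df x in qn0.
have eq0 : 0 < enorm q.
  rewrite /enorm sqrtr_gt0 lt_def dotv_ge0 andbT; apply/eqP => /dotv_eq0 /eqP.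
  by rewrite (negbTE qn0).
have key : forall e, 0 < e -> dotv q q <= e * enorm q.
  move=> e e0.
  have [t [t0 ht]] := @grad_small _ _ _ _ x _ e hg qn0 e0.
  have hs := @SC' _ _ g dg alpha ap sc (H *m x) (H *m (x + t *: q)).
  move: hs ht => /=.
  have -> : H *m (x + t *: q) - H *m x = t *: (H *m q) by rewrite mulmxDr addrC addKr scalemxAr.
  rewrite dotvZl dotv_mulmx -/w !dotvZr enormZ gtr0_norm //.
  have -> : dotv q q = dotv q w - dotv (df x) q by rewrite {1}/q dotvDr dotvNr (dotvC q (df x)).
  move=> h1 h2.
  have : t * (dotv q w - dotv (df x) q) <= t * (e * enorm q).
    rewrite mulrBr; apply: ltW; lra.
  by rewrite ler_pM2l.
have : enorm q <= 0.
  apply/ler_addgt0Pr => e e0; rewrite add0r.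
  have := key e e0; rewrite -enormE2 expr2 ler_pM2r //.
by rewrite leNgt eq0.
Qed.

Lemma enorm0 (R : realType) n : enorm (0 : 'cV[R]_n) = 0.
Proof. by rewrite /enorm dotv0l sqrtr0. Qed.

Lemma enorm_gt0 (R : realType) n (q : 'cV[R]_n) : q != 0 -> 0 < enorm q.
Proof.
move=> qn0; rewrite /enorm sqrtr_gt0 lt_def dotv_ge0 andbT; apply/eqP => /dotv_eq0 /eqP.
by rewrite (negbTE qn0).
Qed.

Lemma mx_bound (R : realType) m p (H : 'M[R]_(m, p)) : exists K : R,
  forall z, enorm (H *m z) <= K * enorm z.
Proof.
pose r (i : 'I_m) : 'cV[R]_p := (row i H)^T.
exists (Num.sqrt (\sum_i dotv (r i) (r i))) => z.
rewrite /enorm -sqrtrM; last by apply: sumr_ge0 => i _; apply: dotv_ge0.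
apply: ler_wsqrtr.
have E : forall i, (H *m z) i ord0 = dotv (r i) z.
  by move=> i; rewrite mxE; apply: eq_bigr => j _; rewrite !mxE.
rewrite {1}/dotv big_distrl /=; apply: ler_sum => i _.
by rewrite E -expr2 CS2.
Qed.

Arguments mx_bound {R m p}.
Arguments enorm_gt0 {R n}.
Arguments enorm0 {R n}.
Lemma opnorm_bound (R : realType) m p (H : 'M[R]_(m, p)) z :
  enorm (H *m z) <= opnorm2 H * enorm z.
Proof.
have [->|zn0] := eqVneq z 0; first by rewrite mulmx0 !enorm0 mulr0.
have [K HK] := mx_bound H.
set S := [set r | exists x : 'cV[R]_p, x != 0 /\ r = enorm (H *m x) / enorm x].
have ub : has_ubound S.
  exists K => r [y [yn0 ->]].
  by rewrite ler_pdivrMr ?enorm_gt0 ?HK.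
have := ub_le_sup ub (ex_intro _ z (conj zn0 erefl)).
by rewrite ler_pdivrMr ?enorm_gt0.
Qed.

Lemma HT_bound (R : realType) m p (H : 'M[R]_(m, p)) w :
  (opnorm2 H ^+ 2)^-1 * enorm (H^T *m w) ^+ 2 <= enorm w ^+ 2.
Proof.
set nH := opnorm2 H.
have [nH0|nHn0] := eqVneq nH 0.
  by rewrite nH0 expr0n /= invr0 mul0r sqr_ge0.
set y := H^T *m w.
have h1 : enorm y ^+ 2 <= enorm w * (nH * enorm y).
  rewrite enormE2 {1}/y dotv_mulmx trmxK.
  apply: le_trans (CS _ _) _.
  by rewrite ler_wpM2l ?enorm_ge0 // opnorm_bound.
have [y0|yp] := eqVneq (enorm y) 0.
  by rewrite y0 expr0n /= mulr0 sqr_ge0.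
have ypos : 0 < enorm y by rewrite lt_def yp enorm_ge0.
have h2 : enorm y <= nH * enorm w.
  by move: h1; rewrite expr2 mulrCA mulrA ler_pM2r.
have o2 : 0 < nH ^+ 2 by rewrite lt_def sqr_ge0 andbT sqrf_eq0.
rewrite ler_pdivrMl // -exprMn.
rewrite ler_pXn2r ?nnegrE ?enorm_ge0 //.
by apply: le_trans (ltW ypos) h2.
Qed.

Theorem lemma5p1 (R : realType) (m p : nat) (H : 'M[R]_(m, p))
  (g : 'cV[R]_m -> R) (dg : 'cV[R]_m -> 'cV[R]_m)
  (df : 'cV[R]_p -> 'cV[R]_p) (alpha L cH : R) :
  0 < alpha ->
  has_gradient g dg ->
  strongly_convex alpha g dg ->
  L_smooth L dg ->
  has_gradient (fun x => g (H *m x)) df ->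
  argmin (fun x => g (H *m x)) !=set0 ->
  0 < cH ->
  (forall x xs, is_proj (argmin (fun x => g (H *m x))) x xs ->
     enorm (H *m x - H *m xs) ^+ 2 >= cH * enorm (x - xs) ^+ 2) ->
  forall x xs, is_proj (argmin (fun x => g (H *m x))) x xs ->
    dotv (df x - df xs) (x - xs) >=
      L * alpha * cH / (L + alpha) * enorm (x - xs) ^+ 2
      + (opnorm2 H ^+ 2)^-1 / (L + alpha) * enorm (df x - df xs) ^+ 2.
Proof.
move=> ap _ sc ls hgf _ cH0 hoff x xs proj.
have gx := @grad_comp _ _ _ H g dg df alpha ap sc hgf.
rewrite (gx x) (gx xs) -mulmxBr.
set G := dg (H *m x) - dg (H *m xs).
rewrite dotv_mulmx trmxK (mulmxBr H).
have hH := hoff x xs proj.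
have hT := @HT_bound _ _ _ H G.
have hc := @cocoer _ _ g dg alpha L ap sc ls (H *m xs) (H *m x).
rewrite -/G in hc.
have a0 : 0 <= enorm (x - xs) ^+ 2 by apply: sqr_ge0.
have [Lneg|Lpos] := ltP L 0.
  have z : forall u v : 'cV[R]_m, enorm (u - v) = 0.
    move=> u v; have := ls u v; have := enorm_ge0 (dg u - dg v); have := enorm_ge0 (u - v).
    move=> h1 h2 h3; apply/eqP; rewrite eq_le h1 andbT.
    have h4 : 0 <= L * enorm (u - v) by apply: le_trans h2 h3.
    nra.
  have G0 : G = 0.
    apply: dotv_eq0; rewrite -enormE2.
    have := ls (H *m x) (H *m xs); rewrite (z (H *m x)) mulr0 -/G => h.
    have : enorm G = 0 by apply/eqP; rewrite eq_le h enorm_ge0.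
    by move=> ->; rewrite expr0n.
  rewrite G0 mulmx0 enorm0 dotv0l expr0n /= mulr0 addr0.
  move: hH; rewrite (z (H *m x)) expr0n /= => hH.
  have : enorm (x - xs) ^+ 2 = 0.
    apply/eqP; rewrite eq_le a0 andbT.
    by rewrite -(pmulr_rle0 _ cH0).
  by move=> ->; rewrite mulr0.
have LA : 0 < L + alpha by rewrite ltr_wpDl.
rewrite (enormE2 G) in hT.
rewrite (enormE2 (H *m x - H *m xs)) in hH.
have -> : L * alpha * cH / (L + alpha) * enorm (x - xs) ^+ 2 +
    (opnorm2 H ^+ 2)^-1 / (L + alpha) * enorm (H^T *m G) ^+ 2 =
    (L * alpha * (cH * enorm (x - xs) ^+ 2) + (opnorm2 H ^+ 2)^-1 * enorm (H^T *m G) ^+ 2) / (L + alpha).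
  by ring.
rewrite ler_pdivrMr //.
have h5 : L * alpha * (cH * enorm (x - xs) ^+ 2) <= L * alpha * dotv (H *m x - H *m xs) (H *m x - H *m xs).
  by apply: ler_wpM2l; [rewrite mulr_ge0 // ltW | exact: hH].
move: hT hc h5.
set T := _ * enorm (H^T *m G) ^+ 2.
set A := L * alpha * (cH * _).
set b := dotv (H *m x - H *m xs) _.
set GG := dotv G G.
set Gd := dotv G _.
move=> hT hc h5.
lra.
Qed.
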